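(* Let $s\ge5$ be a fixed integer. There exists a unique real number $\rho(s)>2$ such that $L(\rho(s),s)=0$. Moreover, \[ L(r,s)<0 \text{ for } r\in[2,\rho(s)),\qquad L(r,s)>0 \text{ for } r\in(\rho(s),\infty). \] Furthermore, if $s\ge6$, then $\rho(s)>s$.
   Context: For an integer $s\ge2$ and real $r\ge2$ (with $rs-r-s>0$), define \[ L(r,s)=\frac rs\log(s-1)+(r-1)\log(r-1)-\frac{rs-r-s}{s}\log r-\frac{rs-r-s}{s(s-1)}\log(rs-r-s). \] *)

(* Defs.v *)
From Stdlib Require Import Reals.
Open Scope R_scope.

Definition L (r : R) (s : nat) : R :=
  let S := INR s in
  r / S * ln (S - 1) + (r - 1) * ln (r - 1)
  - (r * S - r - S) / S * ln r
  - (r * S - r - S) / (S * (S - 1)) * ln (r * S - r - S).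

(* Main.v *)
Require Import Defs.
From Stdlib Require Import Reals Lra Psatz.
From Coquelicot Require Import Coquelicot.
Open Scope R_scope.

Definition Lf (S r : R) := r / S * ln (S - 1) + (r - 1) * ln (r - 1)
  - (r * S - r - S) / S * ln r - (r * S - r - S) / (S * (S - 1)) * ln (r * S - r - S).
Definition Df S r := ln (r-1) - ln r + 1/r + (ln (S-1) + ln r - ln (r*S - r - S))/S.
Definition DDf S r := (r*(S-1) - S - r*r + r)/(r*r*(r-1)*(r*S-r-S)).

Lemma t_pos S r : 5 <= S -> 3/2 < r -> 0 < r*S - r - S.
Proof. intros; nra. Qed.

Lemma Lf_deriv S r : 5 <= S -> 3/2 < r -> is_derive (Lf S) r (Df S r).
Proof.
  intros hS hr. pose proof (t_pos S r hS hr).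
  unfold Lf, Df. auto_derive.
  - repeat split; lra.
  - unfold Rminus. field. repeat split; lra.
Qed.

Lemma Df_deriv S r : 5 <= S -> 3/2 < r -> is_derive (Df S) r (DDf S r).
Proof.
  intros hS hr. pose proof (t_pos S r hS hr).
  unfold DDf, Df. auto_derive.
  - repeat split; lra.
  - unfold Rminus. field. repeat split; lra.
Qed.
Lemma deriv_cont f x l : is_derive f x l -> continuity_pt f x.
Proof.
  intros H. apply continuity_pt_filterlim.
  assert (E : ex_derive f x) by (exists l; exact H).
  exact (ex_derive_continuous f x E).
Qed.

Lemma ln_le_xm1 y : 0 < y -> ln y <= y - 1.
Proof. intros. pose proof (exp_ineq1_le (ln y)). rewrite exp_ln in H0; lra. Qed.

Lemma ln_ge_1my y : 0 < y -> 1 - / y <= ln y.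
Proof.
  intros. pose proof (ln_le_xm1 (/ y) (Rinv_0_lt_compat _ H)).
  rewrite ln_Rinv in H0; lra.
Qed.

Lemma mvt_nonneg f df a b : a <= b ->
  (forall x, a <= x <= b -> is_derive f x (df x)) ->
  (forall x, a <= x <= b -> 0 <= df x) -> f a <= f b.
Proof.
  intros hab hd hp.
  destruct (MVT_gen f a b df) as [c [hc e]].
  - intros x hx. apply hd. rewrite Rmin_left in hx; [|lra]. rewrite Rmax_right in hx; lra.
  - intros x hx. apply (deriv_cont _ _ (df x)). apply hd.
    rewrite Rmin_left in hx; [|lra]. rewrite Rmax_right in hx; lra.
  - rewrite Rmin_left in hc; [|lra]. rewrite Rmax_right in hc; [|lra].
    pose proof (hp c hc). nra.
Qed.

Lemma mvt_pos f df a b : a < b ->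
  (forall x, a <= x <= b -> is_derive f x (df x)) ->
  (forall x, a <= x <= b -> 0 < df x) -> f a < f b.
Proof.
  intros hab hd hp.
  destruct (MVT_gen f a b df) as [c [hc e]].
  - intros x hx. apply hd. rewrite Rmin_left in hx; [|lra]. rewrite Rmax_right in hx; lra.
  - intros x hx. apply (deriv_cont _ _ (df x)). apply hd.
    rewrite Rmin_left in hx; [|lra]. rewrite Rmax_right in hx; lra.
  - rewrite Rmin_left in hc; [|lra]. rewrite Rmax_right in hc; [|lra].
    pose proof (hp c hc). nra.
Qed.

Lemma ln_lt_half y : 1 < y -> ln y < (y - / y) / 2.
Proof.
  intros hy.
  set (h := fun z => (z - / z) / 2 - ln z).
  set (dh := fun z => (z - 1) * (z - 1) / (2 * (z * z))).
  assert (hd : forall z, 1 <= z -> is_derive h z (dh z)).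
  { intros z hz. unfold h, dh. auto_derive. lra. field. lra. }
  assert (h1 : h 1 = 0). { unfold h. rewrite ln_1. field. }
  set (m := (1 + y) / 2).
  assert (A : h 1 <= h m).
  { apply (mvt_nonneg h dh). unfold m; lra.
    intros; apply hd; lra.
    intros x hx. unfold dh. apply Rmult_le_pos. nra. apply Rlt_le, Rinv_0_lt_compat. nra. }
  assert (B : h m < h y).
  { apply (mvt_pos h dh). unfold m; lra.
    intros; apply hd; unfold m in *; lra.
    intros x hx. unfold m in hx. unfold dh. apply Rmult_lt_0_compat. nra. apply Rinv_0_lt_compat. nra. }
  unfold h in *. lra.
Qed.

Lemma ln_ge_pade y : 1 <= y -> 2 * (y - 1) / (y + 1) <= ln y.
Proof.
  intros hy.
  set (h := fun z => ln z - 2 * (z - 1) / (z + 1)).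
  set (dh := fun z => (z - 1) * (z - 1) / (z * ((z + 1) * (z + 1)))).
  assert (hd : forall z, 1 <= z -> is_derive h z (dh z)).
  { intros z hz. unfold h, dh. auto_derive. lra. field. lra. }
  assert (h1 : h 1 = 0). { unfold h. rewrite ln_1. field. }
  assert (A : h 1 <= h y).
  { apply (mvt_nonneg h dh). lra.
    intros; apply hd; lra.
    intros x hx. unfold dh. apply Rmult_le_pos. nra. apply Rlt_le, Rinv_0_lt_compat. nra. }
  unfold h in *. lra.
Qed.

Lemma Lf_eq S r : 5 <= S -> 3/2 < r -> Lf S r =
  (ln (S-1) + ln r)/(S-1) + (r-1)*ln((r-1)/r)
  - (r*S-r-S)/(S*(S-1)) * ln((r*S-r-S)/((S-1)*r)).
Proof.
  intros hS hr. pose proof (t_pos S r hS hr).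
  rewrite ln_div by lra. rewrite ln_div by nra. rewrite ln_mult by lra.
  unfold Lf. field. lra.
Qed.

Lemma Lf2_neg S : 5 <= S -> Lf S 2 < 0.
Proof.
  intros hS. rewrite Lf_eq by lra.
  replace ((2-1)/2) with (/2) by field. rewrite ln_Rinv by lra.
  replace ((2*S-2-S)/((S-1)*2)) with (/2 * ((S-2)/(S-1))) by (field; lra).
  rewrite ln_mult by (try apply Rdiv_lt_0_compat; lra). rewrite ln_Rinv by lra.
  pose proof ln_lt_2 as l2.
  assert (hb : 1 - / ((S-2)/(S-1)) <= ln ((S-2)/(S-1)))
    by (apply ln_ge_1my; apply Rdiv_lt_0_compat; lra).
  replace (/ ((S-2)/(S-1))) with (1 + 1/(S-2)) in hb by (field; lra).
  assert (ha : ln (S-1) <= 2 * ln 2 + (S-5)/4).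
  { replace (S-1) with (2*2*((S-1)/4)) by field.
    rewrite ln_mult by lra. rewrite ln_mult by lra.
    pose proof (ln_le_xm1 ((S-1)/4)). lra. }
  set (a := ln (S-1)) in *. set (l := ln 2) in *. set (b := ln ((S-2)/(S-1))) in *.
  assert (hK : 0 < (2*S-2-S)/(S*(S-1))) by (apply Rdiv_lt_0_compat; nra).
  assert (hb2 : (2*S-2-S)/(S*(S-1)) * (- l + b) >= (2*S-2-S)/(S*(S-1)) * (- l - 1/(S-2))).
  { apply Rle_ge, Rmult_le_compat_l; lra. }
  assert (E : (a + l)/(S-1) + (2-1) * - l - (2*S-2-S)/(S*(S-1)) * (- l - 1/(S-2))
     = (S*(a+l) - S*(S-1)*l + (S-2)*l + 1)/(S*(S-1))) by (field; lra).
  assert (N : S*(a+l) - S*(S-1)*l + (S-2)*l + 1 < 0).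
  { assert (S*a <= S*(2*l + (S-5)/4)) by (apply Rmult_le_compat_l; lra).
    assert (0 < (l - /2) * (S*S - 5*S + 2)) by (apply Rmult_lt_0_compat; nra).
    assert (0 <= S * (S - 5)) by nra.
    clearbody a l b. nra. }
  assert ((S*(a+l) - S*(S-1)*l + (S-2)*l + 1)/(S*(S-1)) < 0).
  { apply Rdiv_neg_pos; [exact N| nra]. }
  lra.
Qed.

Lemma exp_big S : 5 <= S -> S <= exp (S-1).
Proof. intros. pose proof (exp_ineq1_le (S-1)). lra. Qed.

Lemma Lf_big_pos S : 5 <= S -> 0 < Lf S (exp (S-1)).
Proof.
  intros hS. pose proof (exp_big S hS) as hE.
  rewrite Lf_eq by lra. rewrite ln_exp.
  set (E := exp (S-1)) in *.
  assert (hl : 0 < ln (S-1)) by (rewrite <- ln_1; apply ln_increasing; lra).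
  assert (h1 : 1 - / ((E-1)/E) <= ln ((E-1)/E)) by (apply ln_ge_1my; apply Rdiv_lt_0_compat; lra).
  replace (/ ((E-1)/E)) with (E/(E-1)) in h1 by (field; lra).
  assert (h1' : (E-1) * (1 - E/(E-1)) <= (E-1) * ln ((E-1)/E)) by (apply Rmult_le_compat_l; lra).
  replace ((E-1) * (1 - E/(E-1))) with (-1) in h1' by (field; lra).
  pose proof (t_pos S E hS ltac:(lra)).
  assert (h2 : ln ((E*S-E-S)/((S-1)*E)) < 0).
  { rewrite <- ln_1. apply ln_increasing. apply Rdiv_lt_0_compat; nra.
    apply (Rmult_lt_reg_r ((S-1)*E)). nra.
    unfold Rdiv. rewrite Rmult_assoc, Rinv_l by nra. nra. }
  assert (hK : 0 < (E*S-E-S)/(S*(S-1))) by (apply Rdiv_lt_0_compat; nra).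
  assert (0 < (E*S-E-S)/(S*(S-1)) * - ln ((E*S-E-S)/((S-1)*E))) by (apply Rmult_lt_0_compat; lra).
  replace ((ln (S-1) + (S-1))/(S-1)) with (ln (S-1)/(S-1) + 1) by (field; lra).
  assert (0 < ln (S-1)/(S-1)) by (apply Rdiv_lt_0_compat; lra).
  lra.
Qed.

Lemma Df_pos_big S r : 5 <= S -> (S+1)/2 <= r -> 0 < Df S r.
Proof.
  intros hS hr. pose proof (t_pos S r hS ltac:(lra)) as ht.
  unfold Df.
  replace (ln (r-1) - ln r) with (- ln (r/(r-1))) by (rewrite ln_div by lra; ring).
  replace (ln (S-1) + ln r - ln (r*S-r-S)) with (ln ((S-1)*r/(r*S-r-S)))
    by (rewrite ln_div, ln_mult by nra; ring).
  assert (hA : ln (r/(r-1)) < (r/(r-1) - /(r/(r-1)))/2)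
    by (apply ln_lt_half; apply (Rmult_lt_reg_r (r-1)); [lra|]; field_simplify; lra).
  replace ((r/(r-1) - /(r/(r-1)))/2) with (1/r + 1/(2*r*(r-1))) in hA by (field; lra).
  assert (hB : 1 - /((S-1)*r/(r*S-r-S)) <= ln ((S-1)*r/(r*S-r-S)))
    by (apply ln_ge_1my; apply Rdiv_lt_0_compat; nra).
  replace (1 - /((S-1)*r/(r*S-r-S))) with (S/((S-1)*r)) in hB by (field; nra).
  assert (hB' : S/((S-1)*r) / S <= ln ((S-1)*r/(r*S-r-S)) / S)
    by (apply Rmult_le_compat_r; [apply Rlt_le, Rinv_0_lt_compat; lra| exact hB]).
  replace (S/((S-1)*r) / S) with (1/((S-1)*r)) in hB' by (field; nra).
  assert (0 <= 1/((S-1)*r) - 1/(2*r*(r-1))).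
  { replace (1/((S-1)*r) - 1/(2*r*(r-1))) with ((2*r - 1 - S)/(2*r*(r-1)*(S-1))) by (field; nra).
    apply Rmult_le_pos. lra. apply Rlt_le, Rinv_0_lt_compat. nra. }
  lra.
Qed.

Lemma Df_incr S a b : 5 <= S -> 3/2 < a -> a < b -> b < (S+1)/2 -> Df S a < Df S b.
Proof.
  intros hS ha hab hb.
  apply (mvt_pos (Df S) (DDf S)); [lra| |].
  - intros; apply Df_deriv; lra.
  - intros x hx. pose proof (t_pos S x hS ltac:(lra)). unfold DDf.
    apply Rdiv_lt_0_compat; [|repeat apply Rmult_lt_0_compat; lra].
    assert (0 < (x - 3/2) * ((S+1)/2 - x)) by (apply Rmult_lt_0_compat; lra).
    nra.
Qed.

Lemma keyQ S : 5 <= S -> forall x, 2 < x -> 0 <= Lf S x ->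
  forall y, x < y -> Lf S x < Lf S y.
Proof.
  intros hS x hx hLx y hxy.
  destruct (MVT_gen (Lf S) 2 x (Df S)) as [c [hc e]].
  - intros z hz. rewrite Rmin_left in hz by lra. rewrite Rmax_right in hz by lra.
    apply Lf_deriv; lra.
  - intros z hz. rewrite Rmin_left in hz by lra. rewrite Rmax_right in hz by lra.
    apply (deriv_cont _ _ (Df S z)). apply Lf_deriv; lra.
  - rewrite Rmin_left in hc by lra. rewrite Rmax_right in hc by lra.
    pose proof (Lf2_neg S hS).
    assert (hDc : 0 < Df S c).
    { destruct (Rlt_or_le 0 (Df S c)) as [h|h]; [exact h|]. nra. }
    assert (hall : forall z, c <= z -> 0 < Df S z).
    { intros z hz. destruct (Rle_or_lt ((S+1)/2) z) as [h|h].
      - apply Df_pos_big; lra.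
      - destruct (Req_dec c z) as [<-|hne]; [exact hDc|].
        pose proof (Df_incr S c z hS ltac:(lra) ltac:(lra) h). lra. }
    apply (mvt_pos (Lf S) (Df S)); [lra| |].
    + intros; apply Lf_deriv; lra.
    + intros; apply hall; lra.
Qed.

Definition g (S : R) := 2*(S-1)*(S-1)/(2*S-1) - (2*S-3)/(2*(S-1)).

Lemma LfS_neg S : 6 <= S -> ln (S*(S-1)) < g S -> Lf S S < 0.
Proof.
  intros hS hg. rewrite Lf_eq by lra.
  replace ((S*S-S-S)/(S*(S-1))) with ((S-2)/(S-1)) by (field; lra).
  replace ((S*S-S-S)/((S-1)*S)) with ((S-2)/(S-1)) by (field; lra).
  replace ((S-1)/S) with (/ (S/(S-1))) by (field; lra).
  rewrite ln_Rinv by (apply Rdiv_lt_0_compat; lra).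
  replace ((S-2)/(S-1)) with (/ ((S-1)/(S-2))) by (field; lra).
  rewrite ln_Rinv by (apply Rdiv_lt_0_compat; lra).
  assert (h1 : 2*(S/(S-1) - 1)/(S/(S-1) + 1) <= ln (S/(S-1))).
  { apply ln_ge_pade. apply (Rmult_le_reg_r (S-1)); [lra|]. field_simplify; lra. }
  replace (2*(S/(S-1) - 1)/(S/(S-1) + 1)) with (2/(2*S-1)) in h1 by (field; lra).
  assert (h2 : ln ((S-1)/(S-2)) < ((S-1)/(S-2) - /((S-1)/(S-2)))/2).
  { apply ln_lt_half. apply (Rmult_lt_reg_r (S-2)); [lra|]. field_simplify; lra. }
  replace (((S-1)/(S-2) - /((S-1)/(S-2)))/2) with ((2*S-3)/(2*(S-1)*(S-2))) in h2 by (field; lra).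
  rewrite ln_mult in hg by lra.
  set (A := ln (S/(S-1))) in *. set (B := ln ((S-1)/(S-2))) in *.
  set (a := ln (S-1)) in *. set (b := ln S) in *.
  assert (e1 : (S-1) * A >= (S-1) * (2/(2*S-1))) by (apply Rle_ge, Rmult_le_compat_l; lra).
  assert (e2 : / ((S-1)/(S-2)) * B < / ((S-1)/(S-2)) * ((2*S-3)/(2*(S-1)*(S-2)))).
  { apply Rmult_lt_compat_l; [apply Rinv_0_lt_compat, Rdiv_lt_0_compat; lra| exact h2]. }
  replace (/ ((S-1)/(S-2)) * ((2*S-3)/(2*(S-1)*(S-2)))) with ((2*S-3)/(2*(S-1)*(S-1))) in e2 by (field; lra).
  replace (2/(2*S-1)) with ((S-1)*(S-1)*2/((2*S-1)*(S-1)*(S-1))) in e1 by (field; lra).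
  assert (e3 : (a + b)/(S-1) < g S / (S-1)).
  { apply Rmult_lt_compat_r; [apply Rinv_0_lt_compat; lra| lra]. }
  assert (e4 : g S / (S-1) = (S-1)*((S-1)*(S-1)*2/((2*S-1)*(S-1)*(S-1))) - (2*S-3)/(2*(S-1)*(S-1)))
    by (unfold g; field; lra).
  lra.
Qed.

Lemma inv_le a c : 0 < c -> c <= a -> / a <= / c.
Proof. intros. apply Rinv_le_contravar; lra. Qed.

Lemma ln2_up : ln 2 < 17/24.
Proof.
  replace 2 with (4/3 * (3/2)) by field.
  rewrite ln_mult by lra.
  pose proof (ln_lt_half (4/3) ltac:(lra)). pose proof (ln_lt_half (3/2) ltac:(lra)).
  replace ((4/3 - /(4/3))/2) with (7/24) in H by field.
  replace ((3/2 - /(3/2))/2) with (5/12) in H0 by field.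
  lra.
Qed.

Lemma gbound_nat k : ln ((INR k + 6) * (INR k + 6 - 1)) < g (INR k + 6).
Proof.
  induction k as [|k IH].
  - simpl. replace ((0+6)*(0+6-1)) with 30 by ring.
    assert (ln 30 < ln (2^5)) by (apply ln_increasing; simpl; lra).
    rewrite ln_pow in H by lra. pose proof ln2_up.
    unfold g. simpl in H. replace (2 * (0 + 6 - 1) * (0 + 6 - 1) / (2 * (0 + 6) - 1) -
      (2 * (0 + 6) - 3) / (2 * (0 + 6 - 1))) with (50/11 - 9/10) by field. lra.
  - rewrite S_INR. pose proof (pos_INR k). assert (hS6 : 6 <= INR k + 6) by lra. set (S := INR k + 6) in *.
    replace (INR k + 1 + 6) with (S + 1) by (unfold S; ring).
    replace ((S+1)*(S+1-1)) with ((S*(S-1)) * ((S+1)/(S-1))) by (field; lra).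
    rewrite ln_mult by (try apply Rdiv_lt_0_compat; nra).
    pose proof (ln_le_xm1 ((S+1)/(S-1)) ltac:(apply Rdiv_lt_0_compat; lra)).
    replace ((S+1)/(S-1) - 1) with (2/(S-1)) in H0 by (field; lra).
    assert (E : g (S+1) - g S = 1 - /(4*S*S-1) - /(2*S*(S-1))) by (unfold g; field; nra).
    pose proof (inv_le (4*S*S-1) 10 ltac:(lra) ltac:(nra)).
    pose proof (inv_le (2*S*(S-1)) 10 ltac:(lra) ltac:(nra)).
    assert (2/(S-1) <= 2/5).
    { unfold Rdiv. apply Rmult_le_compat_l; [lra|]. apply inv_le; lra. }
    lra.
Qed.

Theorem lemma6p2_R (s : nat) (hs : (5 <= s)%nat) :
  exists rho : R,
    2 < rho /\ Lf (INR s) rho = 0 /\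
    (forall r : R, 2 < r -> Lf (INR s) r = 0 -> r = rho) /\
    (forall r : R, 2 <= r < rho -> Lf (INR s) r < 0) /\
    (forall r : R, rho < r -> 0 < Lf (INR s) r) /\
    ((6 <= s)%nat -> INR s < rho).
Proof.
  assert (hS : 5 <= INR s) by (replace 5 with (INR 5) by (simpl; ring); apply le_INR; exact hs).
  set (S := INR s) in *.
  pose proof (Lf2_neg S hS) as h2. pose proof (Lf_big_pos S hS) as hE.
  pose proof (exp_big S hS) as hEb.
  destruct (Ranalysis5.IVT_interv (Lf S) 2 (exp (S-1))) as [rho [hr e]].
  - intros a ha. apply (deriv_cont _ _ (Df S a)). apply Lf_deriv; lra.
  - lra.
  - exact h2.
  - exact hE.
  - assert (hr2 : 2 < rho) by (destruct (Req_dec rho 2) as [->|]; lra).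
    pose proof (keyQ S hS) as Q.
    exists rho. split; [exact hr2|]. split; [exact e|].
    split; [|split; [|split]].
    + intros r hr' er. destruct (Rtotal_order r rho) as [h|[h|h]]; [|exact h|].
      * pose proof (Q r hr' ltac:(lra) rho h). lra.
      * pose proof (Q rho hr2 ltac:(lra) r h). lra.
    + intros r [hr1 hr3]. destruct (Rlt_or_le (Lf S r) 0) as [h|h]; [exact h|].
      destruct (Req_dec r 2) as [->|hne]; [lra|].
      pose proof (Q r ltac:(lra) h rho hr3). lra.
    + intros r hr'. pose proof (Q rho hr2 ltac:(lra) r hr'). lra.
    + intros h6.
      assert (hS6 : S = INR (s - 6) + 6).
      { unfold S. rewrite minus_INR by exact h6. simpl. ring. }
      pose proof (gbound_nat (s-6)) as hg. rewrite <- hS6 in hg.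
      assert (6 <= S) by (rewrite hS6; pose proof (pos_INR (s-6)); lra).
      pose proof (LfS_neg S ltac:(lra) hg).
      destruct (Rtotal_order S rho) as [h|[h|h]]; [exact h| |].
      * rewrite <- h in e. lra.
      * pose proof (Q rho hr2 ltac:(lra) S h). lra.
Qed.

Theorem lemma6p2 (s : nat) (hs : (5 <= s)%nat) :
  exists rho : R,
    2 < rho /\ L rho s = 0 /\
    (forall r : R, 2 < r -> L r s = 0 -> r = rho) /\
    (forall r : R, 2 <= r < rho -> L r s < 0) /\
    (forall r : R, rho < r -> 0 < L r s) /\
    ((6 <= s)%nat -> INR s < rho).
Proof.
  exact (lemma6p2_R s hs).
Qed.
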